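(* Let $S$ be an inverse semigroup that is a mirror semigroup, with semilattice of idempotents $\Sigma$. If $(S,\leqslant)$ is a continuous poset (resp. a dcpo, a domain, an algebraic poset), then $(\Sigma,\leqslant)$ is a continuous poset (resp. a dcpo, a domain, an algebraic poset).
   Context: An inverse semigroup is a semigroup $S$ in which every $s$ has a unique $s^*$ with $ss^*s=s$ and $s^*ss^*=s^*$. $\Sigma=\Sigma(S)$ is the set of idempotents. The intrinsic order is $s\leqslant t$ iff $s=t\epsilon$ for some idempotent $\epsilon$. A subset is directed if nonempty and any two elements have an upper bound in it. $S$ is a mirror semigroup if every directed subset of $\Sigma$ having a supremum in $(\Sigma,\leqslant)$ also has a supremum in $(S,\leqslant)$. In a poset, $x$ is way-below $y$ ($x\ll y$) if for every directed subset $D$ that has a supremum with $y\leqslant \sup D$, there is $d\in D$ with $x\leqslant d$. A poset is continuous if for every $s$ the set $\{t : t\ll s\}$ is directed with supremum $s$. A dcpo is a poset in which every directed subset has a supremum; a domain is a continuous dcpo. An element $k$ is compact if $k\ll k$; a poset is algebraic if every element is the supremum of the directed set of compact elements below it. *)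

(* Defs.v *)
Record InvSemigroup := {
  carrier :> Type;
  mul : carrier -> carrier -> carrier;
  mulA : forall x y z, mul x (mul y z) = mul (mul x y) z;
  star : carrier -> carrier;
  star_l : forall s, mul (mul s (star s)) s = s;
  star_r : forall s, mul (mul (star s) s) (star s) = star s;
  star_uniq : forall s t, mul (mul s t) s = s -> mul (mul t s) t = t -> t = star s
}.

Section Defs.
Variable S : InvSemigroup.

Definition idem (e : S) : Prop := mul S e e = e.

Definition ileq (s t : S) : Prop := exists e, idem e /\ s = mul S t e.

Definition fullset (s : S) : Prop := True.
End Defs.

(** Generic poset notions for the subposet (P, le) of a type T
    (le restricted to elements satisfying P). *)
Section PosetNotions.
Context {T : Type}. Variables (le : T -> T -> Prop) (P : T -> Prop).

Definition directed (D : T -> Prop) : Prop :=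
  (forall x, D x -> P x) /\ (exists x, D x) /\
  (forall x y, D x -> D y -> exists z, D z /\ le x z /\ le y z).

Definition is_sup (D : T -> Prop) (s : T) : Prop :=
  P s /\ (forall d, D d -> le d s) /\
  (forall u, P u -> (forall d, D d -> le d u) -> le s u).

Definition way_below (x y : T) : Prop :=
  forall D s, directed D -> is_sup D s -> le y s -> exists d, D d /\ le x d.

Definition continuous_poset : Prop :=
  forall s, P s ->
    directed (fun t => P t /\ way_below t s) /\
    is_sup (fun t => P t /\ way_below t s) s.

Definition dcpo : Prop :=
  forall D, directed D -> exists s, is_sup D s.

Definition domain : Prop := continuous_poset /\ dcpo.

Definition compact (k : T) : Prop := way_below k k.

Definition algebraic_poset : Prop :=
  forall s, P s ->
    directed (fun k => P k /\ compact k /\ le k s) /\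
    is_sup (fun k => P k /\ compact k /\ le k s) s.
End PosetNotions.

Definition mirror (S : InvSemigroup) : Prop :=
  forall D : S -> Prop,
    directed (ileq S) (idem S) D ->
    (exists s, is_sup (ileq S) (idem S) D s) ->
    exists s, is_sup (ileq S) (fullset S) D s.

(* Main.v *)
Require Import Defs.
From Stdlib Require Import Setoid.

Lemma idemZ (S : InvSemigroup) e z : idem S e -> mul S e (mul S e z) = mul S e z.
Proof. intro He. rewrite (mulA S). unfold idem in He. rewrite He. reflexivity. Qed.

Lemma idem_mul (S : InvSemigroup) e f : idem S e -> idem S f -> idem S (mul S e f).
Proof.
  intros He Hf.
  pose proof (star_l S (mul S e f)) as Hl.
  pose proof (star_r S (mul S e f)) as Hr.
  pose proof (star_uniq S (mul S e f) (mul S (mul S f (star S (mul S e f))) e)) as Hu.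
  pose proof (star_uniq S (star S (mul S e f)) (mul S e f)) as Hu2.
  remember (star S (mul S e f)) as x.
  specialize (Hu2 Hr Hl).
  assert (HrZ : forall z, mul S x (mul S e (mul S f (mul S x z))) = mul S x z).
  { intro z. assert (H : mul S (mul S (mul S x (mul S e f)) x) z = mul S x z)
      by (rewrite Hr; reflexivity).
    rewrite <- !(mulA S) in H. exact H. }
  assert (Hy : mul S (mul S f x) e = x).
  { apply Hu.
    - rewrite <- !(mulA S). rewrite (idemZ S f _ Hf), (idemZ S e _ He).
      rewrite <- !(mulA S) in Hl. exact Hl.
    - rewrite <- !(mulA S). rewrite (idemZ S e _ He), (idemZ S f _ Hf).
      rewrite HrZ. reflexivity. }
  assert (Hx : idem S x).
  { unfold idem. rewrite <- Hy. rewrite <- !(mulA S). rewrite HrZ. reflexivity. }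
  assert (Hxs : x = star S x).
  { apply star_uniq; unfold idem in Hx; rewrite !Hx; reflexivity. }
  unfold idem. rewrite Hu2, <- Hxs. exact Hx.
Qed.

Lemma idem_star (S : InvSemigroup) e : idem S e -> e = star S e.
Proof. intro He. apply star_uniq; unfold idem in He; rewrite !He; reflexivity. Qed.

Lemma idem_comm (S : InvSemigroup) e f : idem S e -> idem S f -> mul S e f = mul S f e.
Proof.
  intros He Hf.
  pose proof (idem_mul S e f He Hf) as Hef.
  pose proof (idem_mul S f e Hf He) as Hfe.
  assert (H : mul S f e = star S (mul S e f)).
  { apply star_uniq.
    - rewrite <- !(mulA S). rewrite (idemZ S f _ Hf), (idemZ S e _ He).
      unfold idem in Hef. rewrite <- !(mulA S) in Hef. exact Hef.
    - rewrite <- !(mulA S). rewrite (idemZ S e _ He), (idemZ S f _ Hf).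
      unfold idem in Hfe. rewrite <- !(mulA S) in Hfe. exact Hfe. }
  rewrite H. rewrite <- (idem_star S _ Hef). reflexivity.
Qed.

Lemma ileq_refl (S : InvSemigroup) s : ileq S s s.
Proof.
  exists (mul S (star S s) s). split.
  - unfold idem. rewrite (mulA S), (star_r S). reflexivity.
  - rewrite (mulA S), (star_l S). reflexivity.
Qed.

Lemma ileq_trans (S : InvSemigroup) s t u : ileq S s t -> ileq S t u -> ileq S s u.
Proof.
  intros [e [He ->]] [f [Hf ->]]. exists (mul S f e). split.
  - apply idem_mul; assumption.
  - rewrite (mulA S). reflexivity.
Qed.

Lemma ileq_down (S : InvSemigroup) x e : ileq S x e -> idem S e -> idem S x.
Proof. intros [f [Hf ->]] He. apply idem_mul; assumption. Qed.

Lemma sup_idem (S : InvSemigroup) (D : S -> Prop) t :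
  (forall d, D d -> idem S d) -> is_sup (ileq S) (fullset S) D t -> idem S t.
Proof.
  intros HD [_ [Hub Hl]].
  assert (Htt : idem S (mul S t (star S t))).
  { unfold idem. rewrite (mulA S), (star_l S). reflexivity. }
  apply (ileq_down S t (mul S t (star S t))); [|exact Htt].
  apply Hl; [exact I|]. intros d Hd.
  exists d. split; [exact (HD d Hd)|].
  destruct (Hub d Hd) as [f [Hf Hdf]].
  rewrite Hdf at 2. rewrite <- !(mulA S).
  assert (H : mul S (mul S (mul S t (star S t)) t) f = mul S t f)
    by (rewrite (star_l S); reflexivity).
  rewrite <- !(mulA S) in H. rewrite H. exact Hdf.
Qed.

Lemma wb_le (S : InvSemigroup) (P : S -> Prop) x y :
  way_below (ileq S) P x y -> P y -> ileq S x y.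
Proof.
  intros H Py.
  destruct (H (fun z => z = y) y) as [d [-> Hd]]; auto.
  - split; [intros z ->; exact Py|]. split; [exists y; reflexivity|].
    intros a b -> ->. exists y. split; [reflexivity|]. split; apply ileq_refl.
  - split; [exact Py|]. split; [intros d ->; apply ileq_refl|].
    intros u _ Hu. apply Hu. reflexivity.
  - apply ileq_refl.
Qed.

Lemma ML (S : InvSemigroup) (HM : mirror S) x e :
  way_below (ileq S) (fullset S) x e -> way_below (ileq S) (idem S) x e.
Proof.
  intros Hwb D s HD Hs Hes.
  destruct (HM D HD (ex_intro _ s Hs)) as [t Ht].
  assert (HD' : directed (ileq S) (fullset S) D).
  { destruct HD as [_ [H1 H2]]. split; [intros; exact I|]. split; assumption. }
  destruct Hs as [Ps [Hubs Hls]].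
  assert (Hts : ileq S t s) by (destruct Ht as [_ [_ Hl]]; apply Hl; [exact I| exact Hubs]).
  assert (Pt : idem S t) by (apply (ileq_down S t s); assumption).
  assert (Hst : ileq S s t) by (apply Hls; [exact Pt| destruct Ht as [_ [Hu _]]; exact Hu]).
  apply (Hwb D t HD' Ht). eapply ileq_trans; eassumption.
Qed.

Theorem lemma5p2 (S : InvSemigroup) (HM : mirror S) :
  (continuous_poset (ileq S) (fullset S) -> continuous_poset (ileq S) (idem S)) /\
  (dcpo (ileq S) (fullset S) -> dcpo (ileq S) (idem S)) /\
  (domain (ileq S) (fullset S) -> domain (ileq S) (idem S)) /\
  (algebraic_poset (ileq S) (fullset S) -> algebraic_poset (ileq S) (idem S)).
Proof.
  assert (Hcont : continuous_poset (ileq S) (fullset S) -> continuous_poset (ileq S) (idem S)).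
  { intros HC e He.
    destruct (HC e I) as [[_ [[w0 Hw0] Hdir]] [_ [Hub Hlst]]].
    assert (WS : forall t, fullset S t /\ way_below (ileq S) (fullset S) t e -> idem S t).
    { intros t [_ Ht]. apply (ileq_down S t e); [apply (wb_le S (fullset S)); [exact Ht|exact I]|exact He]. }
    assert (WSW : forall t, fullset S t /\ way_below (ileq S) (fullset S) t e ->
                  idem S t /\ way_below (ileq S) (idem S) t e).
    { intros t Ht. split; [apply WS; exact Ht| apply ML; [exact HM| apply Ht]]. }
    assert (key : forall x, way_below (ileq S) (idem S) x e ->
               exists w, (fullset S w /\ way_below (ileq S) (fullset S) w e) /\ ileq S x w).
    { intros x Hx. apply (Hx _ e).
      - split; [exact WS|]. split; [exists w0; exact Hw0| exact Hdir].
      - split; [exact He|]. split; [exact Hub|]. intros u _ Hu. apply Hlst; [exact I|exact Hu].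
      - apply ileq_refl. }
    split.
    - split; [intros x Hx; apply Hx|]. split; [exists w0; apply WSW; exact Hw0|].
      intros x y [_ Hx] [_ Hy].
      destruct (key x Hx) as [w1 [Hw1 Hxw1]]. destruct (key y Hy) as [w2 [Hw2 Hyw2]].
      destruct (Hdir w1 w2 Hw1 Hw2) as [z [Hz [H1 H2]]].
      exists z. split; [apply WSW; exact Hz|]. split; eapply ileq_trans; eassumption.
    - split; [exact He|]. split.
      + intros d [_ Hd]. apply (wb_le S (idem S)); assumption.
      + intros u _ Hu. apply Hlst; [exact I|]. intros d Hd. apply Hu, WSW, Hd. }
  assert (Hdcpo : dcpo (ileq S) (fullset S) -> dcpo (ileq S) (idem S)).
  { intros HD D Hdir.
    assert (Hdir' : directed (ileq S) (fullset S) D).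
    { destruct Hdir as [_ [H1 H2]]. split; [intros; exact I|]. split; assumption. }
    destruct (HD D Hdir') as [t Ht].
    assert (Pt : idem S t) by (apply (sup_idem S D); [apply Hdir| exact Ht]).
    exists t. destruct Ht as [_ [Hu Hl]]. split; [exact Pt|]. split; [exact Hu|].
    intros u _ Hu'. apply Hl; [exact I|exact Hu']. }
  split; [exact Hcont|]. split; [exact Hdcpo|]. split.
  { intros [H1 H2]. split; [apply Hcont|apply Hdcpo]; assumption. }
  intros HA e He.
  destruct (HA e I) as [[_ [[w0 Hw0] Hdir]] [_ [Hub Hlst]]].
  assert (WS : forall t, fullset S t /\ compact (ileq S) (fullset S) t /\ ileq S t e -> idem S t).
  { intros t [_ [_ Ht]]. apply (ileq_down S t e); assumption. }
  assert (WSW : forall t, fullset S t /\ compact (ileq S) (fullset S) t /\ ileq S t e ->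
                idem S t /\ compact (ileq S) (idem S) t /\ ileq S t e).
  { intros t Ht. split; [apply WS; exact Ht|]. split; [apply ML; [exact HM| apply Ht]| apply Ht]. }
  assert (key : forall x, idem S x /\ compact (ileq S) (idem S) x /\ ileq S x e ->
             exists w, (fullset S w /\ compact (ileq S) (fullset S) w /\ ileq S w e) /\ ileq S x w).
  { intros x [_ [Hx Hxe]]. apply (Hx _ e).
    - split; [exact WS|]. split; [exists w0; exact Hw0| exact Hdir].
    - split; [exact He|]. split; [exact Hub|]. intros u _ Hu. apply Hlst; [exact I|exact Hu].
    - exact Hxe. }
  split.
  - split; [intros x Hx; apply Hx|]. split; [exists w0; apply WSW; exact Hw0|].
    intros x y Hx Hy.
    destruct (key x Hx) as [w1 [Hw1 Hxw1]]. destruct (key y Hy) as [w2 [Hw2 Hyw2]].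
    destruct (Hdir w1 w2 Hw1 Hw2) as [z [Hz [H1 H2]]].
    exists z. split; [apply WSW; exact Hz|]. split; eapply ileq_trans; eassumption.
  - split; [exact He|]. split.
    + intros d [_ [_ Hd]]. exact Hd.
    + intros u _ Hu. apply Hlst; [exact I|]. intros d Hd. apply Hu, WSW, Hd.
Qed.
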